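(* Let $\mathbf{x}_1,\dots,\mathbf{x}_n\in\mathbb{R}^d$ and $\mathbf{w}^*\in\mathbb{R}^d$, and set $y_i=\mathbf{x}_i^\top\mathbf{w}^*$ for all $i$; let $\bar\lambda_1=\sup_i\|\mathbf{x}_i\|^2$. Let $\eta>0$, $b_0>0$, $\mathbf{w}_0\in\mathbb{R}^d$, and let $\xi_0,\xi_1,\dots\in\{1,\dots,n\}$ be any sequence of indices. Define $G_j=(\mathbf{x}_{\xi_j}^\top\mathbf{w}_j-y_{\xi_j})\mathbf{x}_{\xi_j}$ and $\mathbf{w}_{j+1}=\mathbf{w}_j-\frac{\eta}{b_{j+1}}G_j$, where either (AdaGrad-Norm) $b_{j+1}^2=b_j^2+\|G_j\|^2$, or (AdaLoss) $b_{j+1}^2=b_j^2+(\mathbf{x}_{\xi_j}^\top\mathbf{w}_j-y_{\xi_j})^2$. Suppose $J\ge1$ is the first index such that $b_J>\eta\bar\lambda_1$, and let $b_{\max}:=\sup_{l\ge0}b_{J+l}$. Then $$b_{\max}\le\eta\bar\lambda_1+\frac{\bar\lambda_1}{\eta}\|\mathbf{w}_{J-1}-\mathbf{w}^*\|^2$$ for AdaGrad-Norm, and $$b_{\max}\le\eta\bar\lambda_1+\frac{1}{\eta}\|\mathbf{w}_{J-1}-\mathbf{w}^*\|^2$$ for AdaLoss.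
   Context: This is stochastic (noiseless) linear regression with component losses $f_i(\mathbf{w})=\frac12(\mathbf{x}_i^\top\mathbf{w}-y_i)^2$, so $G_j=\nabla f_{\xi_j}(\mathbf{w}_j)$. $\|\cdot\|$ is the Euclidean norm. *)

(* Defs.v *)
From HB Require Import structures.
From mathcomp Require Import all_boot all_order all_algebra.
From mathcomp Require Import all_classical all_reals all_analysis.
Set Implicit Arguments. Unset Strict Implicit. Unset Printing Implicit Defensive.
Import Order.TTheory GRing.Theory Num.Theory.
Local Open Scope ring_scope.

Definition dotv (R : realType) (d : nat) (u v : 'rV[R]_d) : R :=
  \sum_(k < d) u 0 k * v 0 k.
Definition sqnorm (R : realType) (d : nat) (u : 'rV[R]_d) : R := dotv u u.

Definition lambda1 (R : realType) (n d : nat) (x : 'I_n -> 'rV[R]_d) : R :=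
  \big[Num.max/0]_(i < n) sqnorm (x i).

Definition resid (R : realType) (n d : nat) (x : 'I_n -> 'rV[R]_d)
  (y : 'I_n -> R) (i : 'I_n) (w : 'rV[R]_d) : R := dotv (x i) w - y i.
Definition grad (R : realType) (n d : nat) (x : 'I_n -> 'rV[R]_d)
  (y : 'I_n -> R) (i : 'I_n) (w : 'rV[R]_d) : 'rV[R]_d :=
  resid x y i w *: x i.

(* Main.v *)
Require Import Defs.
From HB Require Import structures.
From mathcomp Require Import all_boot all_order all_algebra.
From mathcomp Require Import all_classical all_reals all_analysis.
From mathcomp Require Import ring lra.
Import Order.TTheory GRing.Theory Num.Theory.
Local Open Scope ring_scope.

Section Aux.
Variable R : realType.

Lemma dotv_sub_left d (u v w : 'rV[R]_d) : dotv u v - dotv u w = dotv u (v - w).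
Proof.
rewrite /dotv -sumrB; apply: eq_bigr => k _; rewrite !mxE; ring.
Qed.

Lemma sqnorm_ge0 d (u : 'rV[R]_d) : 0 <= sqnorm u.
Proof. by rewrite /sqnorm /dotv; apply: sumr_ge0 => k _; rewrite -expr2 sqr_ge0. Qed.

Lemma sqnormZ d a (u : 'rV[R]_d) : sqnorm (a *: u) = a ^+ 2 * sqnorm u.
Proof.
rewrite /sqnorm /dotv mulr_sumr; apply: eq_bigr => k _; rewrite !mxE; ring.
Qed.

Lemma sqnormBZ d a (e x : 'rV[R]_d) :
  sqnorm (e - a *: x) = sqnorm e - 2 * a * dotv x e + a ^+ 2 * sqnorm x.
Proof.
rewrite /sqnorm /dotv mulr_sumr mulr_sumr -sumrB -big_split /=.
apply: eq_bigr => k _; rewrite !mxE; ring.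
Qed.

Lemma le_lambda1 n d (x : 'I_n -> 'rV[R]_d) i : sqnorm (x i) <= lambda1 x.
Proof.
rewrite /lambda1.
have : i \in index_enum 'I_n by rewrite mem_index_enum.
elim: (index_enum 'I_n) => [|a s IH] //.
rewrite big_cons inE => /orP [/eqP <-|/IH h]; first by rewrite le_max lexx.
by rewrite le_max h orbT.
Qed.

Lemma lambda1_ge0 n d (x : 'I_n -> 'rV[R]_d) : 0 <= lambda1 x.
Proof.
rewrite /lambda1; elim: (index_enum 'I_n) => [|a s IH]; first by rewrite big_nil.
by rewrite big_cons le_max IH orbT.
Qed.

Lemma step_ineq (b b' r g c eta E : R) :
  0 <= b -> b <= b' -> 0 < eta -> 0 <= c -> 0 <= g -> eta * g < b' ->
  b' ^+ 2 - b ^+ 2 <= c * r ^+ 2 ->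
  b' + c / eta * (E - 2 * (eta / b' * r) * r + (eta / b' * r) ^+ 2 * g)
  <= b + c / eta * E.
Proof.
move=> hb hbb he hc hg heg hsq.
have hb' : 0 < b' by apply: le_lt_trans heg; rewrite mulr_ge0 // ltW.
have -> : b' + c / eta * (E - 2 * (eta / b' * r) * r + (eta / b' * r) ^+ 2 * g)
  = b + c / eta * E + ((b' - b) - c * r ^+ 2 / b' - c * r ^+ 2 / b' * (1 - eta * g / b')).
  by field; rewrite ?gt_eqF.

have h1 : b' - b <= c * r ^+ 2 / b'.
  rewrite ler_pdivlMr //; nra.
have h2 : 0 <= c * r ^+ 2 / b' * (1 - eta * g / b').
  apply: mulr_ge0; first by apply: divr_ge0; [apply: mulr_ge0; [|apply: sqr_ge0]|apply: ltW].
  by rewrite subr_ge0 ler_pdivrMr // mul1r ltW.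
lra.
Qed.

Lemma gen_bound n d (x : 'I_n -> 'rV[R]_d) (wstar : 'rV[R]_d) (y : 'I_n -> R)
  (hy : forall i, y i = dotv (x i) wstar) (eta c : R) (heta : 0 < eta) (hc : 0 <= c)
  (xi : nat -> 'I_n) (w : nat -> 'rV[R]_d) (b : nat -> R) (J : nat) :
  (forall j, 0 <= b j) -> (forall j, b j <= b j.+1) ->
  (forall j, b j.+1 ^+ 2 - b j ^+ 2 <= c * resid x y (xi j) (w j) ^+ 2) ->
  (forall j, w j.+1 = w j - (eta / b j.+1) *: grad x y (xi j) (w j)) ->
  (1 <= J)%N -> eta * lambda1 x < b J ->
  (forall j, (j < J)%N -> b j <= eta * lambda1 x) ->
  forall l, b (J + l)%N <= eta * lambda1 x + c / eta * sqnorm (w J.-1 - wstar).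
Proof.
move=> hbpos hbmono hbsq hw hJ hbJ hbefore.
have mono : forall m, b J <= b (J + m)%N.
  elim=> [|m IH]; first by rewrite addn0.
  by apply: le_trans IH _; rewrite addnS.
pose V k := b k + c / eta * sqnorm (w k - wstar).
have step : forall m, V (J.-1 + m.+1)%N <= V (J.-1 + m)%N.
  move=> m; rewrite /V addnS.
  set j := (J.-1 + m)%N.
  have hjJ : j.+1 = (J + m)%N by rewrite /j -addSn prednK.
  have hr : resid x y (xi j) (w j) = dotv (x (xi j)) (w j - wstar).
    by rewrite /resid hy dotv_sub_left.
  have -> : w j.+1 - wstar = (w j - wstar) - (eta / b j.+1 * resid x y (xi j) (w j)) *: x (xi j).
    by rewrite hw /grad scalerA; rewrite addrAC.
  rewrite sqnormBZ -hr.
  apply: step_ineq => //; first exact: sqnorm_ge0.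
  apply: le_lt_trans (lt_le_trans hbJ _); last by rewrite hjJ.
  by rewrite ler_pM2l // le_lambda1.
have inv : forall m, V (J.-1 + m)%N <= V J.-1.
  elim=> [|m IH]; first by rewrite addn0.
  exact: le_trans (step m) IH.
move=> l.
have := inv l.+1; rewrite /V addnS -addSn prednK // => h.
apply: le_trans (_ : b (J + l)%N + c / eta * sqnorm (w (J + l)%N - wstar) <= _).
  by rewrite lerDl; apply: mulr_ge0; [apply: divr_ge0 => //; exact: ltW|exact: sqnorm_ge0].
apply: le_trans h _; rewrite lerD2r; apply: hbefore.
by rewrite ltn_predL.
Qed.

End Aux.
Arguments sqnorm_ge0 {R d}.
Arguments le_lambda1 {R n d}.
Arguments lambda1_ge0 {R n d}.
Arguments gen_bound {R n d x wstar y}.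

Theorem mainTheorem6 (R : realType) (n d : nat)
  (x : 'I_n -> 'rV[R]_d) (wstar : 'rV[R]_d) (y : 'I_n -> R)
  (hy : forall i, y i = dotv (x i) wstar)
  (eta b0 : R) (heta : 0 < eta) (hb0 : 0 < b0)
  (w0 : 'rV[R]_d) (xi : nat -> 'I_n) :
  (* AdaGrad-Norm *)
  (forall (w : nat -> 'rV[R]_d) (b : nat -> R) (J : nat),
     w 0%N = w0 -> b 0%N = b0 ->
     (forall j, b j.+1 = Num.sqrt (b j ^+ 2 + sqnorm (grad x y (xi j) (w j)))) ->
     (forall j, w j.+1 = w j - (eta / b j.+1) *: grad x y (xi j) (w j)) ->
     (1 <= J)%N -> eta * lambda1 x < b J ->
     (forall j, (j < J)%N -> b j <= eta * lambda1 x) ->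
     (ereal_sup [set ((b (J + l)%N)%:E) | l in [set: nat]] <=
        (eta * lambda1 x + lambda1 x / eta * sqnorm (w J.-1 - wstar))%:E)%E)
  /\
  (* AdaLoss *)
  (forall (w : nat -> 'rV[R]_d) (b : nat -> R) (J : nat),
     w 0%N = w0 -> b 0%N = b0 ->
     (forall j, b j.+1 = Num.sqrt (b j ^+ 2 + resid x y (xi j) (w j) ^+ 2)) ->
     (forall j, w j.+1 = w j - (eta / b j.+1) *: grad x y (xi j) (w j)) ->
     (1 <= J)%N -> eta * lambda1 x < b J ->
     (forall j, (j < J)%N -> b j <= eta * lambda1 x) ->
     (ereal_sup [set ((b (J + l)%N)%:E) | l in [set: nat]] <=
        (eta * lambda1 x + 1 / eta * sqnorm (w J.-1 - wstar))%:E)%E).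
Proof.
have gen_b : forall (b : nat -> R) (s : nat -> R), b 0%N = b0 -> (forall j, 0 <= s j) ->
    (forall j, b j.+1 = Num.sqrt (b j ^+ 2 + s j)) ->
    [/\ forall j, 0 <= b j, forall j, b j <= b j.+1 &
        forall j, b j.+1 ^+ 2 - b j ^+ 2 = s j].
  move=> b s hb0' hs hb.
  have pos : forall j, 0 <= b j.
    case=> [|j]; first by rewrite hb0' ltW.
    by rewrite hb; exact: Num.Theory.sqrtr_ge0.
  have sq : forall j, b j.+1 ^+ 2 - b j ^+ 2 = s j.
    move=> j; rewrite hb sqr_sqrtr; first by rewrite [_ + s j]addrC addrK.
    by apply: addr_ge0; [exact: sqr_ge0|exact: hs].
  split=> // j; have h1 := sq j; have h2 := pos j; have h3 := pos j.+1; have h4 := hs j.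
  rewrite leNgt; apply/negP => hlt.
  have : b j.+1 ^+ 2 < b j ^+ 2 by rewrite ltr_pXn2r // inE ?(le_lt_trans h3 hlt) ?ltW.
  lra.
split.
- move=> w b J hw0 hb0' hb hw hJ hbJ hbef.
  have [pos mono sq] := gen_b b (fun j => sqnorm (grad x y (xi j) (w j))) hb0' (fun j => sqnorm_ge0 _) hb.
  apply: ge_ereal_sup => _ [l _ <-]; rewrite lee_fin.
  apply: (gen_bound hy _ _ heta (lambda1_ge0 x) xi w b J pos mono) => // j.
  rewrite sq /grad sqnormZ mulrC; apply: ler_wpM2r; [exact: sqr_ge0|exact: le_lambda1].
- move=> w b J hw0 hb0' hb hw hJ hbJ hbef.
  have [pos mono sq] := gen_b b (fun j => resid x y (xi j) (w j) ^+ 2) hb0' (fun j => sqr_ge0 _) hb.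
  apply: ge_ereal_sup => _ [l _ <-]; rewrite lee_fin.
  apply: (gen_bound hy _ _ heta ler01 xi w b J pos mono) => // j.
  by rewrite sq mul1r.
Qed.
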